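(* Let $n_1,n_1',n_2,n_2'\in\mathbb{N}$. For $i=1,2$ let $\phi_i:\mathbb{N}^{n_i}\to\mathbb{N}^{n_i'}$ be monotonic maps that change the Stanley depth by $\ell_i$ with respect to $g_i\in\mathbb{N}^{n_i}$ and $g_i'\in\mathbb{N}^{n_i'}$. Then the product map $(\phi_1,\phi_2):\mathbb{N}^{n_1+n_2}\to\mathbb{N}^{n_1'+n_2'}$, $(a,b)\mapsto(\phi_1(a),\phi_2(b))$, changes the Stanley depth by $\ell_1+\ell_2$ with respect to $(g_1,g_2)$ and $(g_1',g_2')$.
   Context: $\mathbb{N}^n$ carries the componentwise partial order; $[a,b]=\{c: a\le c\le b\}$; a map is monotonic if it preserves this order. A monotonic map $\phi:\mathbb{N}^n\to\mathbb{N}^{n'}$ changes the Stanley depth by $\ell\in\mathbb{Z}$ with respect to $g\in\mathbb{N}^n$ and $g'\in\mathbb{N}^{n'}$ if (1) $\phi(g)\le g'$, and (2) for every interval $[a',b']\subset[0,g']$, the set $\phi^{-1}([a',b'])\cap[0,g]$ is a finite disjoint union $\bigcup_i[a^i,b^i]$ of intervals with $\#\{j\in[n]: b^i_j=g_j\}\ge\#\{j\in[n']: b'_j=g'_j\}+\ell$ for all $i$. *)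

(* Defs.v *)
From mathcomp Require Import all_boot all_order all_algebra.
Set Implicit Arguments. Unset Strict Implicit. Unset Printing Implicit Defensive.

Definition vec (n : nat) := 'I_n -> nat.

Definition vle n (a b : vec n) : Prop := forall i, a i <= b i.

Definition vzero n : vec n := fun _ => 0.

Definition in_interval n (a b c : vec n) : Prop := vle a c /\ vle c b.

Definition monotonic n n' (phi : vec n -> vec n') : Prop :=
  forall a b, vle a b -> vle (phi a) (phi b).

Definition nb_eq n (b g : vec n) : nat := #|[pred j : 'I_n | b j == g j]|.

Definition changes_sdepth n n' (phi : vec n -> vec n') (l : int)
    (g : vec n) (g' : vec n') : Prop :=
  vle (phi g) g' /\
  forall a' b' : vec n',
    (forall c, in_interval a' b' c -> in_interval (@vzero n') g' c) ->
    exists I : seq (vec n * vec n),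
      (forall x : vec n,
          (in_interval (@vzero n) g x /\ in_interval a' b' (phi x)) <->
          (exists2 i, i < size I & in_interval (nth (@vzero n, @vzero n) I i).1
                                             (nth (@vzero n, @vzero n) I i).2 x)) /\
      (forall i j x, i < size I -> j < size I -> i != j ->
          in_interval (nth (@vzero n, @vzero n) I i).1 (nth (@vzero n, @vzero n) I i).2 x ->
          in_interval (nth (@vzero n, @vzero n) I j).1 (nth (@vzero n, @vzero n) I j).2 x ->
          False) /\
      (forall i, i < size I ->
          ((nb_eq (nth (@vzero n, @vzero n) I i).2 g)%:Z >= (nb_eq b' g')%:Z + l)%R).

Definition vcat n1 n2 (a : vec n1) (b : vec n2) : vec (n1 + n2) :=
  fun i => match split i with inl j => a j | inr k => b k end.
Definition vfst n1 n2 (x : vec (n1 + n2)) : vec n1 := fun j => x (lshift n2 j).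
Definition vsnd n1 n2 (x : vec (n1 + n2)) : vec n2 := fun k => x (rshift n1 k).

Definition prod_map n1 n1' n2 n2' (phi1 : vec n1 -> vec n1') (phi2 : vec n2 -> vec n2')
  : vec (n1 + n2) -> vec (n1' + n2') :=
  fun x => vcat (phi1 (@vfst n1 n2 x)) (phi2 (@vsnd n1 n2 x)).

(* Main.v *)
Require Import Defs.
From mathcomp Require Import all_boot all_order all_algebra.
From mathcomp Require Import zify.
From Stdlib Require Import FunctionalExtensionality.

Section Helpers.

Lemma vcat_l n1 n2 (a : vec n1) (b : vec n2) j : vcat a b (lshift n2 j) = a j.
Proof. by rewrite /vcat (unsplitK (inl _ : 'I_n1 + 'I_n2)). Qed.

Lemma vcat_r n1 n2 (a : vec n1) (b : vec n2) j : vcat a b (rshift n1 j) = b j.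
Proof. by rewrite /vcat (unsplitK (inr _ : 'I_n1 + 'I_n2)). Qed.

Lemma vle_split n1 n2 (x y : vec (n1 + n2)) :
  vle x y <-> vle (vfst x) (vfst y) /\ vle (vsnd x) (vsnd y).
Proof.
split.
  by move=> H; split => i; apply: H.
move=> [H1 H2] i; case: (splitP i) => j ej.
  have -> : i = lshift n2 j by apply: val_inj.
  exact: H1.
have -> : i = rshift n1 j by apply: val_inj.
exact: H2.
Qed.

Lemma vle_ext n (a b a' b' : vec n) : a =1 a' -> b =1 b' -> vle a b -> vle a' b'.
Proof. by move=> ea eb H i; rewrite -ea -eb. Qed.

Lemma int_ext n (a b c a' b' c' : vec n) : a =1 a' -> b =1 b' -> c =1 c' ->
  in_interval a b c -> in_interval a' b' c'.
Proof. by move=> ea eb ec [H1 H2]; split; [exact: vle_ext H1|exact: vle_ext H2]. Qed.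

Lemma int_split n1 n2 (a b c : vec (n1 + n2)) :
  in_interval a b c <-> in_interval (vfst a) (vfst b) (vfst c) /\
                        in_interval (vsnd a) (vsnd b) (vsnd c).
Proof.
rewrite /in_interval !vle_split; tauto.
Qed.

Lemma nb_eq_split n1 n2 (x y : vec (n1 + n2)) :
  nb_eq x y = nb_eq (vfst x) (vfst y) + nb_eq (vsnd x) (vsnd y).
Proof.
by rewrite /nb_eq -!sum1_card big_split_ord.
Qed.

Lemma nb_eq_ext n (a b a' b' : vec n) : a =1 a' -> b =1 b' -> nb_eq a b = nb_eq a' b'.
Proof. by move=> ea eb; apply: eq_card => i; rewrite !inE /= ea eb. Qed.

Lemma vfst_cat n1 n2 (a : vec n1) (b : vec n2) : vfst (vcat a b) = a.
Proof. apply: functional_extensionality => j; exact: vcat_l. Qed.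
Lemma vsnd_cat n1 n2 (a : vec n1) (b : vec n2) : vsnd (vcat a b) = b.
Proof. apply: functional_extensionality => j; exact: vcat_r. Qed.

End Helpers.

Theorem lemma3p4 (n1 n1' n2 n2' : nat)
  (phi1 : vec n1 -> vec n1') (phi2 : vec n2 -> vec n2')
  (l1 l2 : int) (g1 : vec n1) (g1' : vec n1') (g2 : vec n2) (g2' : vec n2') :
  monotonic phi1 -> monotonic phi2 ->
  changes_sdepth phi1 l1 g1 g1' ->
  changes_sdepth phi2 l2 g2 g2' ->
  changes_sdepth (prod_map phi1 phi2) (l1 + l2)%R (vcat g1 g2) (vcat g1' g2').
Proof.
move=> _ _ [Hg1 H1] [Hg2 H2]; split.
  apply/vle_split; split.
    by rewrite /prod_map !vfst_cat.
  by rewrite /prod_map !vsnd_cat.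
move=> a' b' Hsub.
have [hle|hnle] := boolP [forall i, a' i <= b' i]; last first.
  exists [::]; split; last split.
  - move=> x; split; last by case=> i.
    move=> [_ [Ha Hb]]; case/negP: hnle; apply/forallP => i.
    exact: leq_trans (Ha i) (Hb i).
  - by [].
  - by [].
have hle' : vle a' b' by move=> i; exact: (forallP hle i).
move/vle_split: hle' => [hle1 hle2].
have Hs1 : forall c, in_interval (vfst a') (vfst b') c -> in_interval (@vzero n1') g1' c.
  move=> c1 hc1.
  have hc : in_interval a' b' (vcat c1 (vsnd a')).
    by apply/int_split; rewrite vfst_cat vsnd_cat; split=> //; split=> // i.
  have /int_split[h1 h2] := Hsub _ hc.
  by move: h1; rewrite !vfst_cat.
have Hs2 : forall c, in_interval (vsnd a') (vsnd b') c -> in_interval (@vzero n2') g2' c.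
  move=> c2 hc2.
  have hc : in_interval a' b' (vcat (vfst a') c2).
    by apply/int_split; rewrite vfst_cat vsnd_cat; split=> //; split=> // i.
  have /int_split[h1 h2] := Hsub _ hc.
  by move: h2; rewrite !vsnd_cat.
have [I1 [M1 [D1 S1]]] := H1 _ _ Hs1.
have [I2 [M2 [D2 S2]]] := H2 _ _ Hs2.
set s1 := size I1; set s2 := size I2.
pose d1 := (@vzero n1, @vzero n1); pose d2 := (@vzero n2, @vzero n2).
pose F := fun k => let p := nth d1 I1 (k %/ s2) in let q := nth d2 I2 (k %% s2) in
            (vcat p.1 q.1, vcat p.2 q.2).
have Hk : forall k, k < s1 * s2 -> k %/ s2 < s1 /\ k %% s2 < s2.
  move=> k hk; have s2p : 0 < s2 by case: (s2) hk => //; rewrite muln0.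
  by rewrite ltn_divLR // ltn_pmod.
have Hij : forall i j, i < s1 -> j < s2 ->
    [/\ i * s2 + j < s1 * s2, (i * s2 + j) %/ s2 = i & (i * s2 + j) %% s2 = j].
  move=> i j hi hj; have s2p : 0 < s2 by case: (s2) hj.
  split.
  - by rewrite -ltn_divLR // divnMDl // divn_small // addn0.
  - by rewrite divnMDl // divn_small // addn0.
  - by rewrite modnMDl modn_small.
have HF : forall k x, k < s1 * s2 ->
   (in_interval (nth (@vzero (n1+n2), @vzero (n1+n2)) (mkseq F (s1 * s2)) k).1
                (nth (@vzero (n1+n2), @vzero (n1+n2)) (mkseq F (s1 * s2)) k).2 x <->
    in_interval (nth d1 I1 (k %/ s2)).1 (nth d1 I1 (k %/ s2)).2 (vfst x) /\
    in_interval (nth d2 I2 (k %% s2)).1 (nth d2 I2 (k %% s2)).2 (vsnd x)).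
  move=> k x hk; rewrite nth_mkseq //= /F /=.
  split; first by move/int_split; rewrite !vfst_cat !vsnd_cat.
  by move=> h; apply/int_split; rewrite !vfst_cat !vsnd_cat.
exists (mkseq F (s1 * s2)); rewrite size_mkseq; split; last split.
- move=> x; split.
  + move=> [/int_split[hx1 hx2] /int_split[hp1 hp2]].
    rewrite /prod_map vfst_cat vsnd_cat in hp1 hp2.
    rewrite vfst_cat in hx1; rewrite vsnd_cat in hx2.
    have [i hi Hi] := proj1 (M1 (vfst x)) (conj hx1 hp1).
    have [j hj Hj] := proj1 (M2 (vsnd x)) (conj hx2 hp2).
    have [hk e1 e2] := Hij i j hi hj.
    exists (i * s2 + j) => //.
    by apply/HF => //; rewrite e1 e2.
  + move=> [k hk /(HF _ _ hk) [hx1 hx2]].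
    have [i1 i2] := Hk k hk.
    have [hy1 hy2] := proj2 (M1 (vfst x)) (ex_intro2 _ _ (k %/ s2) i1 hx1).
    have [hz1 hz2] := proj2 (M2 (vsnd x)) (ex_intro2 _ _ (k %% s2) i2 hx2).
    split; apply/int_split; rewrite ?vfst_cat ?vsnd_cat /prod_map ?vfst_cat ?vsnd_cat; by split.
- move=> k k' x hk hk' hkk' /(HF _ _ hk) [a1 a2] /(HF _ _ hk') [b1 b2].
  have [ik jk] := Hk k hk; have [ik' jk'] := Hk k' hk'.
  have [e|ne] := eqVneq (k %/ s2) (k' %/ s2); last exact: D1 ik ik' ne a1 b1.
  have [e'|ne'] := eqVneq (k %% s2) (k' %% s2); last exact: D2 jk jk' ne' a2 b2.
  by move/negP: hkk'; apply; rewrite (divn_eq k s2) (divn_eq k' s2) e e'.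
- move=> k hk; rewrite nth_mkseq //= /F /= (@nb_eq_split n1' n2' b').
  rewrite (@nb_eq_split n1 n2 (vcat _ _)) vfst_cat vsnd_cat vfst_cat vsnd_cat.
  have [ik jk] := Hk k hk.
  have := S1 _ ik; have := S2 _ jk.
  rewrite /d1 /d2 !vfst_cat !vsnd_cat !PoszD; lia.
Qed.
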